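(* For the deterministic many-to-one interference channel, if a collection $A\subseteq\Gamma$ of constraints is consistent, then it is compatible.
   Context: Deterministic many-to-one interference channel with nonnegative integer gains $n_{ii}$ ($0\le i\le K$), $n_{0i}$ ($1\le i\le K$). Notation: $(a)^+=\max(a,0)$; $U_k=\{i:1\le i\le K,\ n_{0i}-n_{ii}<k\le n_{0i}\}$ for $1\le k\le n_{00}$; $f_k(S)=\max(|U_k\cap S|,1)$; $f_{\rm free}(i)=(n_{ii}-n_{0i})^++(n_{0i}-n_{00})^+$, $f_{\rm free}(S)=\sum_{i\in S}f_{\rm free}(i)$. The constraint list $\Gamma$ consists of the individual constraints $I_i: r_i\le n_{ii}$ ($0\le i\le K$) and the sum-rate constraints $\Sigma_S: r_0+\sum_{i\in S}r_i\le f_{\rm free}(S)+\sum_{k=1}^{n_{00}}f_k(S)$ for nonempty $S\subseteq\{1,\dots,K\}$. A subset $A\subseteq\Gamma$ is consistent if there is a rate point $(r_0,\dots,r_K)$ that satisfies every constraint in $A$ with equality and violates no constraint of $\Gamma$. To each constraint $c$ associate $N_s(c),N_d(c)\subseteq\{1,\dots,n_{00}\}$: for $\Sigma_S$, $N_s=\{k:|U_k\cap S|\ge2\}$, $N_d=\{k:U_k\cap S=\varnothing\}$; for $I_i$, $i\ge1$, $N_s=\{k:i\in U_k\}$, $N_d=\varnothing$; for $I_0$, $N_s=\varnothing$, $N_d=\{1,\dots,n_{00}\}$. $A$ is compatible if for any $c,c'\in A$, $N_s(c)\cap N_d(c')=\varnothing$ and $N_s(c')\cap N_d(c)=\varnothing$.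 *)

(* Defs.v *)
From HB Require Import structures.
From mathcomp Require Import all_boot all_order all_algebra.
Set Implicit Arguments. Unset Strict Implicit. Unset Printing Implicit Defensive.
Import Order.TTheory GRing.Theory Num.Theory.

(* Channel parameters: K interferers indexed by 'I_K (paper's users 1..K),
   primary user 0.  n00 = n_{00}, nii i = n_{ii}, n0i i = n_{0i}. *)
Section Channel.
Variables (K n00 : nat) (nii n0i : 'I_K -> nat).

(* U_k = {i : n_{0i} - n_{ii} < k <= n_{0i}} (integer subtraction:
   n0i - nii < k  <->  n0i < k + nii). *)
Definition U (k : nat) : {set 'I_K} :=
  [set i | (n0i i < k + nii i) && (k <= n0i i)].

Definition fk (k : nat) (S : {set 'I_K}) : nat := maxn #|U k :&: S| 1.

(* (a)^+ on integers equals truncated subtraction on nat. *)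
Definition ffree (i : 'I_K) : nat := (nii i - n0i i) + (n0i i - n00).
Definition ffreeS (S : {set 'I_K}) : nat := \sum_(i in S) ffree i.

Inductive constr : Type :=
  | CI0 : constr
  | CI : 'I_K -> constr
  | CS : {set 'I_K} -> constr.

Definition inGamma (c : constr) : bool :=
  match c with
  | CS T => T != set0
  | _ => true
  end.

Definition rhs (c : constr) : nat :=
  match c with
  | CI0 => n00
  | CI i => nii i
  | CS T => ffreeS T + \sum_(1 <= k < n00.+1) fk k T
  end.

Local Open Scope ring_scope.
Definition lhs (R : realFieldType) (r0 : R) (r : 'I_K -> R) (c : constr) : R :=
  match c with
  | CI0 => r0
  | CI i => r i
  | CS T => r0 + \sum_(i in T) r i
  end.

Definition consistent (R : realFieldType) (A : constr -> Prop) : Prop :=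
  exists (r0 : R) (r : 'I_K -> R),
    (forall c, A c -> lhs r0 r c = (rhs c)%:R) /\
    (forall c, inGamma c -> lhs r0 r c <= (rhs c)%:R).
Local Close Scope ring_scope.

Definition inrange (k : nat) : bool := (1 <= k <= n00)%N.

Definition Ns (c : constr) (k : nat) : bool :=
  inrange k &&
  match c with
  | CI0 => false
  | CI i => i \in U k
  | CS T => (2 <= #|U k :&: T|)%N
  end.

Definition Nd (c : constr) (k : nat) : bool :=
  inrange k &&
  match c with
  | CI0 => true
  | CI _ => false
  | CS T => U k :&: T == set0
  end.

Definition compatible (A : constr -> Prop) : Prop :=
  forall c c', A c -> A c' ->
    (forall k, ~~ (Ns c k && Nd c' k)) /\ (forall k, ~~ (Ns c' k && Nd c k)).

End Channel.

(* Main.v *)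
Require Import Defs.
From HB Require Import structures.
From mathcomp Require Import all_boot all_order all_algebra.
From Stdlib Require Import Lia.
Set Implicit Arguments. Unset Strict Implicit. Unset Printing Implicit Defensive.
Import Order.TTheory GRing.Theory Num.Theory.

Ltac nlia := repeat match goal with H : is_true (_ <= _) |- _ => move/ssrnat.leP: H => H end;
  try apply/ssrnat.leP; unfold subn, addn, muln in *; lia.

Lemma sum_lt (a b : nat -> nat) n :
  (forall k, 1 <= k <= n -> a k <= b k) ->
  (exists2 k, 1 <= k <= n & a k < b k) ->
  \sum_(1 <= k < n.+1) a k < \sum_(1 <= k < n.+1) b k.
Proof.
elim: n => [|n IH] hle [k hk hlt].
  by case/andP: hk => h1 h2; move: (leq_trans h1 h2).
rewrite !(big_nat_recr n.+1) //=.
have hn : a n.+1 <= b n.+1 by apply: hle; rewrite leqnn.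
have hs : \sum_(1 <= i < n.+1) a i <= \sum_(1 <= i < n.+1) b i.
  rewrite big_nat_cond [X in _ <= X]big_nat_cond; apply: leq_sum => i /andP[/andP[h1 h2] _].
  by apply: hle; rewrite h1 (ltnW h2).
case: (eqVneq k n.+1) => [ek|ne].
  by rewrite ek in hlt; rewrite -addnS leq_add.
have : \sum_(1 <= k < n.+1) a k < \sum_(1 <= k < n.+1) b k.
  apply: IH.
    move=> i /andP[h1 h2]; apply: hle; rewrite h1 /=; exact: (leq_trans h2).
  exists k => //; case/andP: hk => h1 h2; rewrite h1 /=.
  by rewrite -ltnS ltn_neqAle ne h2.
by move=> h; rewrite -addSn leq_add.
Qed.

Lemma exmax (T : finType) (Q : {set T}) (f : T -> nat) :
  Q != set0 -> exists2 j, j \in Q & forall q, q \in Q -> f q <= f j.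
Proof.
case/set0Pn => x xQ.
case: (@arg_maxnP _ x (fun i => i \in Q) f xQ) => j jQ H. by exists j.
Qed.

Lemma exmin (T : finType) (Q : {set T}) (f : T -> nat) :
  Q != set0 -> exists2 j, j \in Q & forall q, q \in Q -> f j <= f q.
Proof.
case/set0Pn => x xQ.
case: (@arg_minnP _ x (fun i => i \in Q) f xQ) => j jQ H. by exists j.
Qed.

Section Helpers.
Variables (K n00 : nat) (nii n0i : 'I_K -> nat).
Local Notation UU := (U nii n0i).

Definition F (X : {set 'I_K}) : nat :=
  ffreeS n00 nii n0i X + \sum_(1 <= k < n00.+1) fk nii n0i k X.
Definition cov (X : {set 'I_K}) k := UU k :&: X != set0.

Lemma inU i k : (i \in UU k) = (n0i i < k + nii i) && (k <= n0i i).
Proof. by rewrite /U inE. Qed.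

Lemma multN (X Y S T : {set 'I_K}) (f : 'I_K -> nat) :
  (forall i, (i \in X) + (i \in Y) = (i \in S) + (i \in T)) ->
  \sum_(i in X) f i + \sum_(i in Y) f i = \sum_(i in S) f i + \sum_(i in T) f i.
Proof.
move=> H; rewrite !(big_mkcond (fun i => i \in _)) -!big_split /=.
apply: eq_bigr => i _; move: (H i).
by case: (i \in X); case: (i \in Y); case: (i \in S); case: (i \in T);
  rewrite /= ?add0n ?addn0.
Qed.

Lemma multR (R : realFieldType) (X Y S T : {set 'I_K}) (f : 'I_K -> R) :
  (forall i, (i \in X) + (i \in Y) = (i \in S) + (i \in T))%N ->
  (\sum_(i in X) f i + \sum_(i in Y) f i = \sum_(i in S) f i + \sum_(i in T) f i)%R.
Proof.
move=> H; rewrite !(big_mkcond (fun i => i \in _)) -!big_split /=.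
apply: eq_bigr => i _; move: (H i).
by case: (i \in X); case: (i \in Y); case: (i \in S); case: (i \in T);
  rewrite /= ?add0r ?addr0.
Qed.


Lemma fkE k X : fk nii n0i k X = #|UU k :&: X| + ~~ cov X k.
Proof. by rewrite /fk /cov negbK -cards_eq0; case: #|_| => [|n]; rewrite ?addn0. Qed.

Lemma cardmult k (X Y S T : {set 'I_K}) :
  (forall i, (i \in X) + (i \in Y) = (i \in S) + (i \in T)) ->
  #|UU k :&: X| + #|UU k :&: Y| = #|UU k :&: S| + #|UU k :&: T|.
Proof.
move=> H; rewrite -!sum1_card. apply: multN => i; rewrite !in_setI.
by case: (i \in UU k) => //=; apply: H.
Qed.

Lemma exch (X Y S T : {set 'I_K}) k :
  (forall i, (i \in X) + (i \in Y) = (i \in S) + (i \in T)) ->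
  (forall k', 1 <= k' <= n00 ->
     ((cov S k' -> cov X k') /\ (cov T k' -> cov Y k')) \/
     ((cov S k' -> cov Y k') /\ (cov T k' -> cov X k'))) ->
  1 <= k <= n00 -> cov X k -> cov Y k -> ~~ cov T k ->
  F X + F Y < F S + F T.
Proof.
move=> Hm Hp Hk cX cY cT.
rewrite /F /ffreeS.
have e1 := multN (ffree n00 nii n0i) Hm.
suff : \sum_(1 <= k < n00.+1) fk nii n0i k X + \sum_(1 <= k < n00.+1) fk nii n0i k Y <
       \sum_(1 <= k < n00.+1) fk nii n0i k S + \sum_(1 <= k < n00.+1) fk nii n0i k T.
  by move=> h; rewrite addnACA [X in _ < X]addnACA e1 ltn_add2l.
rewrite -!big_split; apply: (@sum_lt (fun k => fk nii n0i k X + fk nii n0i k Y) (fun k => fk nii n0i k S + fk nii n0i k T)).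
  move=> k' hk'; rewrite !fkE; have := cardmult k' Hm.
  case: (Hp k' hk') => [[/implyP h1 /implyP h2]|[/implyP h1 /implyP h2]];
  move: h1 h2; case: (cov X k'); case: (cov Y k'); case: (cov S k'); case: (cov T k');
  move=> //= _ _; move: #|UU k' :&: X| #|UU k' :&: Y| #|UU k' :&: S| #|UU k' :&: T| => a b c d h; nlia.
exists k => //; rewrite !fkE cX cY cT; have := cardmult k Hm.
move: #|UU k :&: X| #|UU k :&: Y| #|UU k :&: S| #|UU k :&: T| => a b c d h; rewrite /=; nlia.
Qed.

Lemma exch' (X Y S T : {set 'I_K}) k :
  (forall i, (i \in X) + (i \in Y) = (i \in S) + (i \in T)) ->
  (forall k', 1 <= k' <= n00 ->
     ((cov S k' -> cov X k') /\ (cov T k' -> cov Y k')) \/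
     ((cov S k' -> cov Y k') /\ (cov T k' -> cov X k'))) ->
  1 <= k <= n00 -> cov X k -> cov Y k -> ~~ cov T k ->
  (forall i, (i \in X) + (i \in Y) = (i \in S) + (i \in T)) /\ F X + F Y < F S + F T.
Proof. move=> H1 H2 H3 H4 H5 H6; split => //; exact: (exch H1 H2 H3 H4 H5 H6). Qed.

Lemma F0 : F set0 = n00.
Proof.
rewrite /F /ffreeS big_set0 add0n.
rewrite (eq_bigr (fun _ => 1)); last by move=> k _; rewrite /fk setI0 cards0.
by rewrite sum_nat_const_nat muln1 subn1.
Qed.

Lemma covL p j k k' : p \in UU k -> j \in UU k -> 1 <= k' -> p \in UU k' -> k' <= k ->
  n0i j - nii j <= n0i p - nii p -> j \in UU k'.
Proof.
rewrite !inU => /andP[? ?] /andP[? ?] ? /andP[? ?] ? ?; apply/andP; split; nlia.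
Qed.

Lemma covR p j k k' : p \in UU k -> j \in UU k -> p \in UU k' -> k <= k' ->
  n0i p <= n0i j -> j \in UU k'.
Proof.
rewrite !inU => /andP[? ?] /andP[? ?] /andP[? ?] ? ?; apply/andP; split; nlia.
Qed.

Lemma cnt n n0 ni :
  \sum_(1 <= k < n.+1) ((n0 < k + ni) && (k <= n0)) <= minn n n0 - (n0 - ni).
Proof.
elim: n => [|n IH]; first by rewrite big_geq.
rewrite big_nat_recr //; apply: leq_trans (leq_add IH (leqnn _)) _.
case E: ((n0 < n.+1 + ni) && (n.+1 <= n0)); [move/andP: E => [h1 h2]|];
  rewrite !minnE /=; nlia.
Qed.

Lemma Icase i (T : {set 'I_K}) k : 1 <= k <= n00 -> i \in UU k -> UU k :&: T == set0 ->
  F (i |: T) < F T + nii i.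
Proof.
move=> Hk iU /eqP T0.
have iT : i \notin T.
  apply/negP => iT; have : i \in UU k :&: T by rewrite in_setI iU.
  by rewrite T0 inE.
rewrite /F /ffreeS.
have e1 : \sum_(i0 in i |: T) ffree n00 nii n0i i0 = ffree n00 nii n0i i + \sum_(i0 in T) ffree n00 nii n0i i0 by rewrite big_setU1.
rewrite e1.
have h1 : \sum_(1 <= k' < n00.+1) fk nii n0i k' (i |: T) <
          \sum_(1 <= k' < n00.+1) (fk nii n0i k' T + (i \in UU k')).
  apply: (@sum_lt (fun k' => fk nii n0i k' (i |: T)) (fun k' => fk nii n0i k' T + (i \in UU k'))).
    move=> k' _; rewrite /fk setIUr.
    have : #|UU k' :&: [set i]| <= (i \in UU k').
      case: (boolP (i \in UU k')) => h.
        by rewrite /= -(cards1 i) subset_leq_card // subsetIr.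
      rewrite leqn0 cards_eq0; apply/eqP/setP => x; rewrite in_setI in_set1 in_set0.
      by apply/andP => -[xU /eqP xi]; move: h; rewrite -xi xU.
    have := cardsU (UU k' :&: [set i]) (UU k' :&: T).
    move: #|_ :|: _| #|UU k' :&: [set i]| #|UU k' :&: T| (nat_of_bool (i \in UU k')) => a b c e ha hb.
    rewrite !maxnE; nlia.
  exists k => //; rewrite /fk setIUr T0 setU0 iU cards0.
  have : #|UU k :&: [set i]| <= 1 by rewrite -(cards1 i) subset_leq_card // subsetIr.
  move: #|UU k :&: [set i]| => a ha; rewrite !maxnE /=; nlia.
have e2 : \sum_(1 <= k' < n00.+1) (fk nii n0i k' T + (i \in UU k')) = \sum_(1 <= k' < n00.+1) fk nii n0i k' T + \sum_(1 <= k' < n00.+1) (i \in UU k') by rewrite big_split.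
rewrite e2 in h1.
have h2 : \sum_(1 <= k' < n00.+1) (i \in UU k') <= minn n00 (n0i i) - (n0i i - nii i).
  under eq_bigr => k' _ do rewrite inU.
  exact: cnt.
move: iU Hk; rewrite inU => /andP[a1 a2] /andP[b1 b2].
have ef : ffree n00 nii n0i i = nii i - n0i i + (n0i i - n00) by [].
rewrite ef; rewrite minnE in h2; nlia.
Qed.

Lemma rrF x k k' : x \in UU k' -> k' <= k -> ~~ (k + nii x <= n0i x).
Proof. rewrite inU => /andP[? ?] ?; rewrite -ltnNge; nlia. Qed.

Lemma toUk x k k' : x \in UU k' -> k <= k' -> ~~ (k + nii x <= n0i x) -> x \in UU k.
Proof. rewrite !inU -ltnNge => /andP[? ?] ? ?; apply/andP; split; nlia. Qed.

Lemma rrT x k k' : x \in UU k' -> k <= k' -> x \notin UU k -> k + nii x <= n0i x.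
Proof. move=> h1 h2 h3; apply/negPn/negP => h4; by rewrite (toUk h1 h2 h4) in h3. Qed.

Lemma Scase (S T : {set 'I_K}) k : 1 <= k <= n00 -> 2 <= #|UU k :&: S| ->
  UU k :&: T == set0 -> exists X Y : {set 'I_K},
  (forall i, (i \in X) + (i \in Y) = (i \in S) + (i \in T)) /\ F X + F Y < F S + F T.
Proof.
move=> Hk h2 /eqP T0.
have Tn x : x \in T -> x \notin UU k.
  move=> xT; apply/negP => xU; have : x \in UU k :&: T by rewrite in_setI xU.
  by rewrite T0 inE.
have cT : ~~ cov T k by rewrite /cov T0 eqxx.
have Pn : UU k :&: S != set0.
  by rewrite -card_gt0; apply: leq_trans h2.
case: (exmax n0i Pn) => j2 j2P j2max.
have Qn : (UU k :&: S) :\ j2 != set0.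
  move: (cardsD1 j2 (UU k :&: S)); rewrite j2P /= => e.
  rewrite -card_gt0; move: e h2; move: #|UU k :&: S| #|(UU k :&: S) :\ j2| => a b -> h; nlia.
case: (exmin (fun j => n0i j - nii j) Qn) => j1 j1Q j1min.
move: (j2P); rewrite in_setI => /andP[j2U j2S].
move: (j1Q); rewrite in_setD1 in_setI => /andP[j12 /andP[j1U j1S]].
have j2T : j2 \notin T by apply/negP => /Tn; rewrite j2U.
case: (leqP (n0i j1 - nii j1) (n0i j2 - nii j2)) => hcase.
- exists (((S :\: [set x in S | k + nii x <= n0i x]) :\ j2) :|: [set x in T | k + nii x <= n0i x]).
  exists (j2 |: ((T :\: [set x in T | k + nii x <= n0i x]) :|: [set x in S | k + nii x <= n0i x])).
  apply: (exch' (k := k)) => //.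
  + move=> i; rewrite !inE.
    case: (eqVneq i j2) => [->|ne].
      by rewrite j2S (negbTE j2T) (negbTE (rrF j2U (leqnn k))).
    by case: (i \in S); case: (i \in T); case: (k + nii i <= n0i i).
  + move=> k' hk'; case/andP: (hk') => hk1 hk2.
    case: (ltngtP k' k) => hkk.
    * left; split.
      - case/set0Pn => x; rewrite in_setI => /andP[xU xS]; apply/set0Pn.
        case: (eqVneq x j2) => [ex|ne].
          exists j1; rewrite in_setI; apply/andP; split.
            apply: (covL j2U j1U hk1 _ (ltnW hkk) hcase); by rewrite -ex.
          by rewrite !inE j12 j1S (rrF j1U (leqnn k)).
        exists x; rewrite in_setI xU !inE ne xS (rrF xU (ltnW hkk)).
        by [].
      - case/set0Pn => x; rewrite in_setI => /andP[xU xT]; apply/set0Pn.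
        exists x; rewrite in_setI xU !inE xT (rrF xU (ltnW hkk)).
        by rewrite orbT.
    * right; split.
      - case/set0Pn => x; rewrite in_setI => /andP[xU xS]; apply/set0Pn.
        case: (boolP (k + nii x <= n0i x)) => rx.
          by exists x; rewrite in_setI xU !inE xS rx !orbT.
        have xUk := toUk xU (ltnW hkk) rx.
        exists j2; rewrite in_setI; apply/andP; split; last by rewrite !inE eqxx.
        apply: (covR xUk j2U xU (ltnW hkk)); apply: j2max; by rewrite in_setI xUk.
      - case/set0Pn => x; rewrite in_setI => /andP[xU xT]; apply/set0Pn.
        exists x; rewrite in_setI xU !inE xT (rrT xU (ltnW hkk) (Tn x xT)).
        by rewrite orbT.
    * left; split.
      - move=> _; apply/set0Pn; exists j1; rewrite in_setI; apply/andP; split.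
          by rewrite hkk.
        by rewrite !inE j12 j1S (rrF j1U (leqnn k)).
      - by rewrite /cov hkk T0 eqxx.
  + apply/set0Pn; exists j1; rewrite in_setI j1U !inE j12 j1S (rrF j1U (leqnn k)).
    by [].
  + apply/set0Pn; exists j2; rewrite in_setI j2U !inE eqxx.
    by [].
- exists (S :\: ((UU k :&: S) :\ j2)); exists (T :|: ((UU k :&: S) :\ j2)).
  apply: (exch' (k := k)) => //.
  + move=> i; case: (boolP (i \in (UU k :&: S) :\ j2)) => iQ.
      move: (iQ); rewrite in_setD1 in_setI => /andP[_ /andP[iU iS]].
      have iT : i \notin T by apply/negP => /Tn; rewrite iU.
      by rewrite in_setD in_setU iQ iS (negbTE iT).
    rewrite in_setD in_setU (negbTE iQ) /= orbF.
    by case: (i \in S); case: (i \in T).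
  + move=> k' hk'; case/andP: (hk') => hk1 hk2; left; split.
    * case/set0Pn => x; rewrite in_setI => /andP[xU xS]; apply/set0Pn.
      case: (boolP (x \in (UU k :&: S) :\ j2)) => xQ.
        exists j2; rewrite in_setI; apply/andP; split; last first.
          by rewrite in_setD j2S in_setD1 eqxx.
        move: (xQ); rewrite in_setD1 in_setI => /andP[_ /andP[xUk _]].
        case: (leqP k' k) => hkk.
          apply: (covL xUk j2U hk1 xU hkk).
          by apply: leq_trans (ltnW hcase) (j1min x xQ).
        apply: (covR xUk j2U xU (ltnW hkk)); apply: j2max; by rewrite in_setI xUk.
      by exists x; rewrite in_setI xU in_setD xS xQ.
    * case/set0Pn => x; rewrite in_setI => /andP[xU xT]; apply/set0Pn.
      by exists x; rewrite in_setI xU in_setU xT.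
  + by apply/set0Pn; exists j2; rewrite in_setI j2U in_setD j2S in_setD1 eqxx.
  + by apply/set0Pn; exists j1; rewrite in_setI j1U in_setU j1Q orbT.
Qed.

End Helpers.

Section Real.
Local Open Scope ring_scope.

Lemma bnd (R : realFieldType) (K n00 : nat) (nii n0i : 'I_K -> nat) (r0 : R) (r : 'I_K -> R) :
  (forall c, inGamma c -> lhs r0 r c <= (rhs n00 nii n0i c)%:R) ->
  forall X : {set 'I_K}, r0 + \sum_(i in X) r i <= (F n00 nii n0i X)%:R.
Proof.
move=> H X; case: (eqVneq X set0) => [->|nX].
  rewrite big_set0 addr0 F0; exact: (H (@CI0 K)).
exact: (H (CS X) nX).
Qed.

End Real.

Theorem lemma3 (R : realFieldType) (K n00 : nat) (nii n0i : 'I_K -> nat)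
    (A : constr K -> Prop) :
  (forall c, A c -> inGamma c) ->
  consistent n00 nii n0i R A ->
  compatible n00 nii n0i A.
Proof.
move=> HA [r0 [r [Heq Hle]]].
have Hb := bnd Hle.
have key : forall c c' k, A c -> A c' -> Ns n00 nii n0i c k -> Nd n00 nii n0i c' k -> False.
  move=> c c' k Ac Ac' Hs Hd.
  have [T [T0 eT]] : exists T, (U nii n0i k :&: T == set0) /\
      (r0 + \sum_(i in T) r i = (F n00 nii n0i T)%:R)%R.
    move: Hd; rewrite /Nd; case/andP => _; case: c' Ac' => [|j|T] Ac' //= hT.
      exists set0; split; first by rewrite setI0.
      by rewrite big_set0 addr0 F0; exact: (Heq _ Ac').
    exists T; split => //; exact: (Heq _ Ac').
  have Hk : 1 <= k <= n00 by move: Hs; rewrite /Ns => /andP[].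
  move: Hs; rewrite /Ns /inrange Hk /=; case: c Ac => [|i|S] Ac //= hc.
  - have ri : (r i = (nii i)%:R)%R := Heq _ Ac.
    have iT : i \notin T.
      apply/negP => iT; have : i \in U nii n0i k :&: T by rewrite in_setI hc.
      by rewrite (eqP T0) inE.
    have hb := Hb (i |: T); rewrite big_setU1 // in hb.
    have hlt := Icase Hk hc T0.
    have : ((F n00 nii n0i T + nii i)%N%:R <= (F n00 nii n0i (i |: T))%:R :> R)%R.
      rewrite natrD -eT -ri -addrA (addrC (\sum_(i0 in T) r i0)%R); exact: hb.
    by rewrite ler_nat leqNgt hlt.
  - have eS : (r0 + \sum_(i in S) r i = (F n00 nii n0i S)%:R)%R := Heq _ Ac.
    case: (Scase Hk hc T0) => X [Y [hm hXY]].
    have hmR := multR r hm.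
    have : ((F n00 nii n0i S + F n00 nii n0i T)%N%:R <=
            (F n00 nii n0i X + F n00 nii n0i Y)%N%:R :> R)%R.
      rewrite (@natrD R (F n00 nii n0i S)) (@natrD R (F n00 nii n0i X)) -eS -eT.
      apply: le_trans (lerD (Hb X) (Hb Y)).
      by rewrite addrACA [X in (_ <= X)%R]addrACA hmR.
    by rewrite ler_nat leqNgt hXY.
move=> c c' Ac Ac'; split => k; apply/negP => /andP[h1 h2].
  exact: (key c c' k).
exact: (key c' c k).
Qed.
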